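(* Consider octahedra $p=(p_1,\ldots,p_6)\in(\mathbf{R}^3)^6$ with $p_1$ and $p_6$ opposite vertices and equatorial cycle $p_2,p_3,p_4,p_5$ (so the opposite pairs are $\{1,6\},\{2,4\},\{3,5\}$), and the vector field (gradient of the mean volume) $$X_p=\tfrac16\big(\nu(2,3,4,5),\ \nu(1,5,6,3),\ \nu(1,2,6,4),\ \nu(1,3,6,5),\ \nu(1,4,6,2),\ \nu(2,5,4,3)\big).$$ Then every $X$-optimal $p$ is a regular octahedron (with opposite vertex pairs $\{p_1,p_6\},\{p_2,p_4\},\{p_3,p_5\}$).
   Context: Notation: $\nu(i_1,\ldots,i_k)=p_{i_1}\times p_{i_2}+\cdots+p_{i_{k-1}}\times p_{i_k}+p_{i_k}\times p_{i_1}$. A configuration $p\in(\mathbf{R}^3)^n$ (not all points equal) is called $X$-optimal if there exist $q=\mu p+(c,\ldots,c)$ with $\mu>0$, $c\in\mathbf{R}^3$, and a real number $\lambda\neq0$ such that $X_q=\lambda q$. *)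

(* Defs.v *)
From Stdlib Require Import Reals Lra.
Open Scope R_scope.

Definition vec3 : Type := (R * R * R)%type.

Definition vadd (a b : vec3) : vec3 :=
  let '(a1, a2, a3) := a in let '(b1, b2, b3) := b in (a1 + b1, a2 + b2, a3 + b3).
Definition vsub (a b : vec3) : vec3 :=
  let '(a1, a2, a3) := a in let '(b1, b2, b3) := b in (a1 - b1, a2 - b2, a3 - b3).
Definition vscale (k : R) (a : vec3) : vec3 :=
  let '(a1, a2, a3) := a in (k * a1, k * a2, k * a3).
Definition dot (a b : vec3) : R :=
  let '(a1, a2, a3) := a in let '(b1, b2, b3) := b in a1 * b1 + a2 * b2 + a3 * b3.
Definition cross (a b : vec3) : vec3 :=
  let '(a1, a2, a3) := a in let '(b1, b2, b3) := b in
  (a2 * b3 - a3 * b2, a3 * b1 - a1 * b3, a1 * b2 - a2 * b1).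

Definition nu4 (a b c d : vec3) : vec3 :=
  vadd (vadd (cross a b) (cross b c)) (vadd (cross c d) (cross d a)).

Record config := Config { P1 : vec3; P2 : vec3; P3 : vec3; P4 : vec3; P5 : vec3; P6 : vec3 }.

Definition Xfield (p : config) : config :=
  let '(Config p1 p2 p3 p4 p5 p6) := p in
  Config (vscale (1/6) (nu4 p2 p3 p4 p5))
         (vscale (1/6) (nu4 p1 p5 p6 p3))
         (vscale (1/6) (nu4 p1 p2 p6 p4))
         (vscale (1/6) (nu4 p1 p3 p6 p5))
         (vscale (1/6) (nu4 p1 p4 p6 p2))
         (vscale (1/6) (nu4 p2 p5 p4 p3)).

Definition cmap (f : vec3 -> vec3) (p : config) : config :=
  let '(Config p1 p2 p3 p4 p5 p6) := p in
  Config (f p1) (f p2) (f p3) (f p4) (f p5) (f p6).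

Definition all_equal (p : config) : Prop :=
  let '(Config p1 p2 p3 p4 p5 p6) := p in
  p1 = p2 /\ p1 = p3 /\ p1 = p4 /\ p1 = p5 /\ p1 = p6.

Definition X_optimal (p : config) : Prop :=
  ~ all_equal p /\
  exists (mu : R) (c : vec3) (lambda : R),
    0 < mu /\ lambda <> 0 /\
    let q := cmap (fun x => vadd (vscale mu x) c) p in
    Xfield q = cmap (vscale lambda) q.

Definition regular_octahedron (p : config) : Prop :=
  let '(Config p1 p2 p3 p4 p5 p6) := p in
  exists (c u v w : vec3),
    0 < dot u u /\ dot u u = dot v v /\ dot u u = dot w w /\
    dot u v = 0 /\ dot u w = 0 /\ dot v w = 0 /\
    p1 = vadd c u /\ p6 = vsub c u /\
    p2 = vadd c v /\ p4 = vsub c v /\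
    p3 = vadd c w /\ p5 = vsub c w.

(* Main.v *)
Require Import Defs.
From Stdlib Require Import Reals Lra.
Open Scope R_scope.

Lemma core3 (k a1 a2 a3 b1 b2 b3 c1 c2 c3 : R) :
  a1 = k*(b2*c3 - b3*c2) -> a2 = k*(b3*c1 - b1*c3) -> a3 = k*(b1*c2 - b2*c1) ->
  b1 = k*(c2*a3 - c3*a2) -> b2 = k*(c3*a1 - c1*a3) -> b3 = k*(c1*a2 - c2*a1) ->
  c1 = k*(a2*b3 - a3*b2) -> c2 = k*(a3*b1 - a1*b3) -> c3 = k*(a1*b2 - a2*b1) ->
  a1*b1+a2*b2+a3*b3 = 0 /\ a1*c1+a2*c2+a3*c3 = 0 /\ b1*c1+b2*c2+b3*c3 = 0 /\
  a1*a1+a2*a2+a3*a3 = b1*b1+b2*b2+b3*b3 /\ a1*a1+a2*a2+a3*a3 = c1*c1+c2*c2+c3*c3.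
Proof.
  intros A1 A2 A3 B1 B2 B3 C1 C2 C3.
  assert (Hab : a1*b1+a2*b2+a3*b3 = 0) by (rewrite A1, A2, A3; ring).
  assert (Hac : a1*c1+a2*c2+a3*c3 = 0) by (rewrite A1, A2, A3; ring).
  assert (Hbc : b1*c1+b2*c2+b3*c3 = 0) by (rewrite B1, B2, B3; ring).
  set (A := a1*a1+a2*a2+a3*a3). set (B := b1*b1+b2*b2+b3*b3). set (C := c1*c1+c2*c2+c3*c3).
  assert (LA : A = k^2*(B*C - (b1*c1+b2*c2+b3*c3)^2)) by (unfold A, B, C; rewrite A1, A2, A3; ring).
  assert (LB : B = k^2*(C*A - (a1*c1+a2*c2+a3*c3)^2)) by (unfold A, B, C; rewrite B1, B2, B3; ring).
  assert (LC : C = k^2*(A*B - (a1*b1+a2*b2+a3*b3)^2)) by (unfold A, B, C; rewrite C1, C2, C3; ring).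
  rewrite Hbc in LA. rewrite Hac in LB. rewrite Hab in LC.
  assert (Cp : 0 <= C) by (unfold C; nra).
  assert (Ap : 0 <= A) by (unfold A; nra).
  assert (Bp : 0 <= B) by (unfold B; nra).
  assert (k2 : 0 <= k^2) by nra.
  repeat split; auto.
  - assert (E : (A - B) * (1 + k^2*C) = 0) by lra.
    apply Rmult_integral in E. destruct E as [E|E]; nra.
  - assert (E : (A - C) * (1 + k^2*B) = 0) by lra.
    apply Rmult_integral in E. destruct E as [E|E]; nra.
Qed.

Lemma sq3 (a b c : R) : a*a+b*b+c*c = 0 -> a = 0 /\ b = 0 /\ c = 0.
Proof. intro h. repeat split; nra. Qed.

Definition v0 : vec3 := (0,0,0).

Lemma coreq (q : config) (lam : R) : lam <> 0 -> Xfield q = cmap (vscale lam) q ->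
  let '(Config q1 q2 q3 q4 q5 q6) := q in
  q6 = vscale (-1) q1 /\ q4 = vscale (-1) q2 /\ q5 = vscale (-1) q3 /\
  dot q1 q2 = 0 /\ dot q1 q3 = 0 /\ dot q2 q3 = 0 /\
  dot q1 q1 = dot q2 q2 /\ dot q1 q1 = dot q3 q3 /\
  (dot q1 q1 = 0 -> q1 = v0 /\ q2 = v0 /\ q3 = v0 /\ q4 = v0 /\ q5 = v0 /\ q6 = v0).
Proof.
  intros Hl H.
  destruct q as [[[x1 y1] z1] [[x2 y2] z2] [[x3 y3] z3] [[x4 y4] z4] [[x5 y5] z5] [[x6 y6] z6]].
  simpl in H. injection H as E1 E2 E3 E4 E5 E6 E7 E8 E9 E10 E11 E12 E13 E14 E15 E16 E17 E18.
  assert (F : forall u v, lam*(u+v) = 0 -> v = -u).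
  { intros u v Huv. apply Rmult_integral in Huv. destruct Huv; [contradiction|lra]. }
  assert (G6 := F x1 x6 ltac:(lra)). assert (G7 := F y1 y6 ltac:(lra)). assert (G8 := F z1 z6 ltac:(lra)).
  assert (G2 := F x2 x4 ltac:(lra)). assert (G3 := F y2 y4 ltac:(lra)). assert (G4 := F z2 z4 ltac:(lra)).
  assert (G9 := F x3 x5 ltac:(lra)). assert (G10 := F y3 y5 ltac:(lra)). assert (G11 := F z3 z5 ltac:(lra)).
  subst x6 y6 z6 x4 y4 z4 x5 y5 z5.
  set (k := 2/3 * /lam).
  assert (S : forall x e, 1/6 * e = lam * x -> forall f, e = 4 * f -> x = k * f).
  { intros x e He f Hf. replace x with (/lam*(lam*x)) by (field; auto).
    rewrite <- He, Hf. unfold k. field. auto. }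
  assert (A1 := S _ _ E1 (y2*z3 - z2*y3) ltac:(ring)).
  assert (A2 := S _ _ E2 (z2*x3 - x2*z3) ltac:(ring)).
  assert (A3 := S _ _ E3 (x2*y3 - y2*x3) ltac:(ring)).
  assert (B1 := S _ _ E4 (y3*z1 - z3*y1) ltac:(ring)).
  assert (B2 := S _ _ E5 (z3*x1 - x3*z1) ltac:(ring)).
  assert (B3 := S _ _ E6 (x3*y1 - y3*x1) ltac:(ring)).
  assert (C1 := S _ _ E7 (y1*z2 - z1*y2) ltac:(ring)).
  assert (C2 := S _ _ E8 (z1*x2 - x1*z2) ltac:(ring)).
  assert (C3 := S _ _ E9 (x1*y2 - y1*x2) ltac:(ring)).
  destruct (core3 k x1 y1 z1 x2 y2 z2 x3 y3 z3 A1 A2 A3 B1 B2 B3 C1 C2 C3)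
    as [H12 [H13 [H23 [L2 L3]]]].
  assert (Zp : x1 * x1 + y1 * y1 + z1 * z1 = 0 ->
     x1 = 0 /\ y1 = 0 /\ z1 = 0 /\ x2 = 0 /\ y2 = 0 /\ z2 = 0 /\ x3 = 0 /\ y3 = 0 /\ z3 = 0).
  { intro h. rewrite h in L2, L3.
    destruct (sq3 _ _ _ h) as [? [? ?]].
    destruct (sq3 _ _ _ (eq_sym L2)) as [? [? ?]].
    destruct (sq3 _ _ _ (eq_sym L3)) as [? [? ?]]. tauto. }
  simpl. unfold v0.
  repeat split; try (f_equal; try f_equal; ring); try assumption.
  all: match goal with h : ?a * ?a + ?b * ?b + ?c * ?c = 0 |- _ =>
         destruct (Zp h) as [-> [-> [-> [-> [-> [-> [-> [-> ->]]]]]]]] end;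
       f_equal; try f_equal; ring.
Qed.

Lemma lin (mu : R) (c0 p q : vec3) : 0 < mu -> q = vadd (vscale mu p) c0 ->
  p = vadd (vscale (- / mu) c0) (vscale (/ mu) q).
Proof.
  intros Hm Hq. subst q. destruct p as [[a b] c]. destruct c0 as [[d e] f].
  simpl. f_equal; [f_equal|]; field; lra.
Qed.

Lemma negl (c a : vec3) (k : R) : vadd c (vscale k (vscale (-1) a)) = vsub c (vscale k a).
Proof. destruct c as [[a1 a2] a3]; destruct a as [[b1 b2] b3]; simpl; f_equal; [f_equal|]; ring. Qed.

Lemma dotsc (k : R) (a b : vec3) : dot (vscale k a) (vscale k b) = k*k*dot a b.
Proof. destruct a as [[a1 a2] a3]; destruct b as [[b1 b2] b3]; simpl; ring. Qed.

Lemma dotpos (a : vec3) : 0 <= dot a a.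
Proof. destruct a as [[a1 a2] a3]; simpl; nra. Qed.

Theorem mainTheorem8 (p : config) :
  X_optimal p -> regular_octahedron p.
Proof.
  intros [Hne [mu [c0 [lam [Hmu [Hlam Heq]]]]]].
  destruct p as [p1 p2 p3 p4 p5 p6].
  simpl in Heq.
  set (q1 := vadd (vscale mu p1) c0) in Heq.
  set (q2 := vadd (vscale mu p2) c0) in Heq.
  set (q3 := vadd (vscale mu p3) c0) in Heq.
  set (q4 := vadd (vscale mu p4) c0) in Heq.
  set (q5 := vadd (vscale mu p5) c0) in Heq.
  set (q6 := vadd (vscale mu p6) c0) in Heq.
  pose proof (coreq (Config q1 q2 q3 q4 q5 q6) lam Hlam Heq) as C.
  simpl in C.
  destruct C as [H6 [H4 [H5 [D12 [D13 [D23 [L2 [L3 Z]]]]]]]].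
  assert (R1 := lin mu c0 p1 q1 Hmu eq_refl).
  assert (R2 := lin mu c0 p2 q2 Hmu eq_refl).
  assert (R3 := lin mu c0 p3 q3 Hmu eq_refl).
  assert (R4 := lin mu c0 p4 q4 Hmu eq_refl).
  assert (R5 := lin mu c0 p5 q5 Hmu eq_refl).
  assert (R6 := lin mu c0 p6 q6 Hmu eq_refl).
  clearbody q1 q2 q3 q4 q5 q6.
  assert (Pos : 0 < dot q1 q1).
  { destruct (Rle_lt_or_eq_dec _ _ (dotpos q1)) as [h|h]; [exact h|].
    exfalso. apply Hne. destruct (Z (eq_sym h)) as [Z1 [Z2 [Z3 [Z4 [Z5 Z6]]]]].
    simpl. rewrite R1, R2, R3, R4, R5, R6, Z1, Z2, Z3, Z4, Z5, Z6. tauto. }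
  exists (vscale (- / mu) c0), (vscale (/ mu) q1), (vscale (/ mu) q2), (vscale (/ mu) q3).
  rewrite !dotsc, <- L2, <- L3, D12, D13, D23.
  assert (0 < / mu * / mu) by (apply Rmult_lt_0_compat; apply Rinv_0_lt_compat; lra).
  repeat split; try ring; try nra; try assumption.
  - rewrite R6, H6. apply negl.
  - rewrite R4, H4. apply negl.
  - rewrite R5, H5. apply negl.
Qed.
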